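(* Let $m>1$, let $[a,b]$ be the computational domain with mesh size $\Delta x=(b-a)/N_x$, cell centers $x_i=a+i\Delta x$ and interfaces $x_{i+1/2}=a+(i+1/2)\Delta x$, and time step $\Delta t$, $\lambda=\Delta t/\Delta x$. Given cell averages $\rho^n_i$, interface velocities $u^n_{i+1/2}$ and growth values $G^n_i$, the scheme proceeds as follows. (Prediction) $u^{n*}_{i+1/2}$ solves the linear system \[ \frac{u^{n*}_{i+1/2}-u^n_{i+1/2}}{\Delta t}=\frac{m}{\Delta x}\Big\{(\rho^n_{i+1})^{m-2}\Big(\frac{\rho^n_{i+3/2}u^{n*}_{i+3/2}-\rho^n_{i+1/2}u^{n*}_{i+1/2}}{\Delta x}-\rho^n_{i+1}G^n_i\Big)-(\rho^n_i)^{m-2}\Big(\frac{\rho^n_{i+1/2}u^{n*}_{i+1/2}-\rho^n_{i-1/2}u^{n*}_{i-1/2}}{\Delta x}-\rho^n_iG^n_i\Big)\Big\}, \] with $\rho^n_{i+1/2}=(\rho^n_i+\rho^n_{i+1})/2$. (Density update) \[ \frac{\rho^{n+1}_i-\rho^n_i}{\Delta t}+\frac{F^n_{i+1/2}-F^n_{i-1/2}}{\Delta x}=\rho^{n+1}_iG^n_i,\qquad F^n_{i+1/2}=\tfrac12\big[\rho^{Ln}_{i+1/2}u^{n*}_{i+1/2}+\rho^{Rn}_{i+1/2}u^{n*}_{i+1/2}-|u^{n*}_{i+1/2}|(\rho^{Rn}_{i+1/2}-\rho^{Ln}_{i+1/2})\big], \] where $\rho^{Ln}_{i+1/2}=\rho^n_i+\frac{\Delta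 x}{2}(\partial_x\rho)^n_i$, $\rho^{Rn}_{i+1/2}=\rho^n_{i+1}-\frac{\Delta x}{2}(\partial_x\rho)^n_{i+1}$, and the slope $(\partial_x\rho)^n_i$ is the minmod of $\frac{\rho^n_{i+1}-\rho^n_i}{\Delta x},\frac{\rho^n_{i+1}-\rho^n_{i-1}}{2\Delta x},\frac{\rho^n_i-\rho^n_{i-1}}{\Delta x}$ (the minimum if all three are positive, the maximum if all three are negative, and $0$ otherwise). (Correction) $u^{n+1}_{i+1/2}=-\frac{m}{m-1}\frac{(\rho^{n+1}_{i+1})^{m-1}-(\rho^{n+1}_i)^{m-1}}{\Delta x}$. Assume $0\le G^n_i\le G_{\max}$ for all $n,i$, and that there is a constant $U>0$ with $|u^{n*}_{i+1/2}|\le U$ for all $n,i$. Assume the initial cell averages satisfy $\rho^0_i\ge0$ for all $i$. If \[ \Delta t\le\frac{\Delta x}{2U}\qquad\text{and}\qquad 1-G_{\max}\Delta t>0, \] then $\rho^n_i\ge0$ for all $n\in\mathbb N$ and all $i$.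
   Context: This is a fully discrete scheme for the 1D cell density model $\partial_t\rho-\partial_x(\rho\,\partial_xp(\rho))=\rho G$, $p(\rho)=\frac{m}{m-1}\rho^{m-1}$, written with velocity $u=-\partial_xp(\rho)$ on a staggered grid ($\rho$ as cell averages, $u$ at cell interfaces). The paper phrases the velocity bound as $\max_{n,j}u^{n*}_{j+1/2}\le U$; the bound is used on the magnitude $|u^{n*}_{j+1/2}|$. *)

(* Defs.v *)
From Stdlib Require Import Reals Lra ZArith.
Open Scope R_scope.

(* Grid functions are indexed by (time step n : nat) and (space index i : Z).
   For interface quantities, index i stands for the interface x_{i+1/2}. *)

(* Real power x^y for x >= 0 (0^y = 0 for y <> 0, 0^0 = 1). *)
Definition pw (x y : R) : R :=
  if Rlt_dec 0 x then Rpower x y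
  else if Req_EM_T y 0 then 1 else 0.

Definition minmod3 (p q r : R) : R :=
  if Rlt_dec 0 p then
    (if Rlt_dec 0 q then (if Rlt_dec 0 r then Rmin p (Rmin q r) else 0) else 0)
  else if Rlt_dec p 0 then
    (if Rlt_dec q 0 then (if Rlt_dec r 0 then Rmax p (Rmax q r) else 0) else 0)
  else 0.

Definition slope (dx : R) (rho : Z -> R) (i : Z) : R :=
  minmod3 ((rho (i+1)%Z - rho i) / dx)
          ((rho (i+1)%Z - rho (i-1)%Z) / (2 * dx))
          ((rho i - rho (i-1)%Z) / dx).

Definition rhoL (dx : R) (rho : Z -> R) (i : Z) : R :=
  rho i + dx / 2 * slope dx rho i.
Definition rhoR (dx : R) (rho : Z -> R) (i : Z) : R :=
  rho (i+1)%Z - dx / 2 * slope dx rho (i+1)%Z.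

Definition flux (dx : R) (rho ustar : Z -> R) (i : Z) : R :=
  / 2 * (rhoL dx rho i * ustar i + rhoR dx rho i * ustar i
         - Rabs (ustar i) * (rhoR dx rho i - rhoL dx rho i)).

Definition rhoh (rho : Z -> R) (i : Z) : R := (rho i + rho (i+1)%Z) / 2.

Definition prediction (m dx dt : R) (rho u ustar G : Z -> R) : Prop :=
  forall i : Z,
    (ustar i - u i) / dt =
    m / dx *
      (pw (rho (i+1)%Z) (m - 2) *
         ((rhoh rho (i+1)%Z * ustar (i+1)%Z - rhoh rho i * ustar i) / dx
          - rho (i+1)%Z * G i)
       - pw (rho i) (m - 2) *
         ((rhoh rho i * ustar i - rhoh rho (i-1)%Z * ustar (i-1)%Z) / dx
          - rho i * G i)).

Definition density_update (dx dt : R) (rho rho1 ustar G : Z -> R) : Prop :=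
  forall i : Z,
    (rho1 i - rho i) / dt + (flux dx rho ustar i - flux dx rho ustar (i-1)%Z) / dx
    = rho1 i * G i.

Definition correction (m dx : R) (rho1 u1 : Z -> R) : Prop :=
  forall i : Z,
    u1 i = - (m / (m - 1)) * ((pw (rho1 (i+1)%Z) (m - 1) - pw (rho1 i) (m - 1)) / dx).

(* Main.v *)
Require Import Defs.
From Stdlib Require Import Reals Lra Lia ZArith.
Open Scope R_scope.

Lemma minmod_prop p q r :
  (0 <= minmod3 p q r \/ p <= minmod3 p q r) /\ (minmod3 p q r <= 0 \/ minmod3 p q r <= r).
Proof.
  unfold minmod3, Rmin, Rmax.
  repeat (destruct Rlt_dec); repeat (destruct Rle_dec); lra.
Qed.

Lemma rhoL_nonneg dx rho i : 0 < dx -> (forall j, 0 <= rho j) -> 0 <= rhoL dx rho i.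
Proof.
  intros Hdx Hr. unfold rhoL, slope.
  destruct (minmod_prop ((rho (i+1)%Z - rho i) / dx)
          ((rho (i+1)%Z - rho (i-1)%Z) / (2 * dx))
          ((rho i - rho (i-1)%Z) / dx)) as [[H|H] _].
  - specialize (Hr i). nra.
  - set (s := minmod3 _ _ _) in *.
    assert (E : dx * ((rho (i+1)%Z - rho i) / dx) = rho (i+1)%Z - rho i) by (field; lra).
    assert (dx * s >= rho (i+1)%Z - rho i) by nra.
    pose proof (Hr i). pose proof (Hr (i+1)%Z). lra.
Qed.

Lemma rhoR_nonneg dx rho i : 0 < dx -> (forall j, 0 <= rho j) -> 0 <= rhoR dx rho i.
Proof.
  intros Hdx Hr. unfold rhoR, slope.
  replace (i + 1 - 1)%Z with i by ring.
  destruct (minmod_prop ((rho (i+1+1)%Z - rho (i+1)%Z) / dx)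
          ((rho (i+1+1)%Z - rho i) / (2 * dx))
          ((rho (i+1)%Z - rho i) / dx)) as [_ [H|H]].
  - specialize (Hr (i+1)%Z). nra.
  - set (s := minmod3 _ _ _) in *.
    assert (E : dx * ((rho (i+1)%Z - rho i) / dx) = rho (i+1)%Z - rho i) by (field; lra).
    assert (dx * s <= rho (i+1)%Z - rho i) by nra.
    pose proof (Hr i). pose proof (Hr (i+1)%Z). lra.
Qed.

Lemma flux_eq dx rho us i :
  flux dx rho us i = Rmax (us i) 0 * rhoL dx rho i + Rmin (us i) 0 * rhoR dx rho i.
Proof.
  unfold flux. generalize (rhoL dx rho i) (rhoR dx rho i) (us i).
  intros L R u. unfold Rmax, Rmin.
  destruct (Rle_dec u 0); destruct (Rcase_abs u).
  - rewrite Rabs_left by lra. field.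
  - assert (u = 0) by lra. subst. rewrite Rabs_R0. field.
  - lra.
  - rewrite Rabs_right by lra. field.
Qed.

Lemma key rho1 r g dt dx Li Ri1 Ri Li1 upi umi upj umj Fi Fj :
  (rho1 - r)/dt + (Fi - Fj)/dx = rho1*g ->
  Fi = upi*Li + umi*Ri -> Fj = upj*Li1 + umj*Ri1 -> r = (Li+Ri1)/2 ->
  0 <= Li -> 0 <= Ri1 -> 0 <= Ri -> 0 <= Li1 ->
  0 <= upi -> upi*dt <= dx/2 -> umi <= 0 -> - umi * dt <= dx/2 ->
  0 <= upj -> upj*dt <= dx/2 -> umj <= 0 -> - umj * dt <= dx/2 ->
  0 <= g -> g*dt < 1 -> 0 < dt -> 0 < dx -> 0 <= rho1.
Proof.
  intros E HFi HFj Hr; intros.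
  assert (E2 : dx*rho1*(1 - dt*g) = dx*r - dt*(Fi - Fj)).
  { apply (Rmult_eq_compat_l (dt*dx)) in E.
    replace (dt * dx * ((rho1 - r) / dt + (Fi - Fj) / dx)) with
      (dx*(rho1 - r) + dt*(Fi-Fj)) in E by (field; lra). nra. }
  assert (E3 : dx*r - dt*(Fi - Fj) = Li*(dx/2 - dt*upi) + Ri1*(dx/2 + dt*umj)
     + (- umi*dt)*Ri + (dt*upj)*Li1) by (rewrite HFi, HFj, Hr; field).
  assert (0 <= dx*r - dt*(Fi - Fj)).
  { rewrite E3.
    assert (0 <= Li*(dx/2 - dt*upi)) by (apply Rmult_le_pos; lra).
    assert (0 <= Ri1*(dx/2 + dt*umj)) by (apply Rmult_le_pos; lra).
    assert (0 <= (- umi*dt)*Ri) by (apply Rmult_le_pos; nra).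
    assert (0 <= (dt*upj)*Li1) by (apply Rmult_le_pos; nra).
    lra. }
  assert (0 < dx*(1-dt*g)) by nra.
  nra.
Qed.

Theorem mainTheorem3
  (m a b : R) (Nx : nat) (dt U Gmax : R)
  (rho u ustar G : nat -> Z -> R)
  (Hm : 1 < m) (Hab : a < b) (HNx : (0 < Nx)%nat) (Hdt : 0 < dt) (HU : 0 < U)
  (Hpred : forall n, prediction m ((b - a) / INR Nx) dt (rho n) (u n) (ustar n) (G n))
  (Hupd : forall n, density_update ((b - a) / INR Nx) dt (rho n) (rho (S n)) (ustar n) (G n))
  (Hcorr : forall n, correction m ((b - a) / INR Nx) (rho (S n)) (u (S n)))
  (HG : forall n i, 0 <= G n i <= Gmax)
  (Hus : forall n i, Rabs (ustar n i) <= U)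
  (H0 : forall i, 0 <= rho O i)
  (HCFL : dt <= ((b - a) / INR Nx) / (2 * U))
  (HGdt : 1 - Gmax * dt > 0) :
  forall n i, 0 <= rho n i.
Proof.
  set (dx := (b - a) / INR Nx) in *.
  assert (Hdx : 0 < dx).
  { unfold dx. apply Rdiv_lt_0_compat; [lra|]. apply lt_0_INR. lia. }
  assert (HdtU : dt * U <= dx / 2).
  { apply (Rmult_le_compat_r (2*U)) in HCFL; [|lra].
    replace (dx / (2 * U) * (2 * U)) with dx in HCFL by (field; lra). lra. }
  induction n as [|n IH]; [exact H0|].
  intro i.
  pose proof (Hupd n i) as E.
  rewrite (flux_eq dx (rho n) (ustar n) i), (flux_eq dx (rho n) (ustar n) (i-1)) in E.
  assert (Hu : forall j, 0 <= Rmax (ustar n j) 0 /\ Rmax (ustar n j) 0 * dt <= dx/2 /\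
             Rmin (ustar n j) 0 <= 0 /\ - Rmin (ustar n j) 0 * dt <= dx/2).
  { intro j. pose proof (Hus n j). pose proof (Rle_abs (ustar n j)).
    pose proof (Rle_abs (- ustar n j)). rewrite Rabs_Ropp in *.
    unfold Rmax, Rmin; destruct Rle_dec; repeat split; nra. }
  destruct (Hu i) as [A1 [A2 [A3 A4]]]. destruct (Hu (i-1)%Z) as [B1 [B2 [B3 B4]]].
  destruct (HG n i).
  eapply (key _ (rho n i) (G n i) dt dx) with (Fi := _) (Fj := _);
    [exact E| reflexivity | reflexivity | | | | | | | | | | | | | | | | | ];
    try assumption;
    try (apply rhoL_nonneg || apply rhoR_nonneg; assumption); try nra.
  unfold rhoL, rhoR. replace (i - 1 + 1)%Z with i by ring. field.
Qed.
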